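(* Let $A=\Bbbk_{-1}[u,v]$ and $G=G_{n,k}$, where $n,k$ are positive coprime integers with $k\not\equiv2\pmod4$. Then the invariant ring $A^G$ is commutative if and only if $n$ or $k$ is even.
   Context: $\Bbbk$ is algebraically closed of characteristic $0$; $\Bbbk_{-1}[u,v]=\Bbbk\langle u,v\rangle/(vu+uv)$; matrices $\begin{pmatrix}a&b\\c&d\end{pmatrix}$ act by $u\mapsto au+cv$, $v\mapsto bu+dv$. With $\omega$ a primitive $(2nk)$th root of unity, $G_{n,k}$ is generated by $\mathrm{diag}(\omega^{2k},\omega^{-2k})$ and $\begin{pmatrix}0&\omega^n\\\omega^n&0\end{pmatrix}$. $A^G=\{a\in A: g\cdot a=a\ \forall g\in G\}$. *)

(* Defs.v *)
From HB Require Import structures.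
From mathcomp Require Import all_boot all_order all_algebra.
Set Implicit Arguments. Unset Strict Implicit. Unset Printing Implicit Defensive.
Import Order.TTheory GRing.Theory.
Local Open Scope ring_scope.

(* The skew polynomial ring k_{-1}[u,v] = k<u,v>/(vu+uv) is modelled on its
   k-basis of ordered monomials u^i v^j: an element a is stored as a
   bivariate polynomial a : {poly {poly K}} whose coefficient of u^i v^j is
   (a`_i)`_j.  Multiplication is the skew one:
     (u^i v^j)(u^k v^l) = (-1)^(j*k) u^(i+k) v^(j+l). *)

Section Skew.
Variable K : fieldType.

Definition skA := {poly {poly K}}.

Definition skcoef (a : skA) (i j : nat) : K := (a`_i)`_j.

Definition skmon (i j : nat) : skA := ('X^j)%:P * 'X^i.

Definition skscale (c : K) (a : skA) : skA := (c%:P)%:P * a.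

Definition skmul (a b : skA) : skA :=
  \sum_(i < size a) \sum_(j < size a`_i)
   \sum_(k < size b) \sum_(l < size b`_k)
     skscale ((-1) ^+ (j * k) * skcoef a i j * skcoef b k l) (skmon (i + k) (j + l)).

Definition skone : skA := skmon 0 0.

Definition skpow (x : skA) (m : nat) : skA := iter m (skmul x) skone.

Definition sku : skA := skmon 1 0.
Definition skv : skA := skmon 0 1.

(* The matrix g = [[a b];[c d]] acts by the algebra automorphism
   u |-> a u + c v, v |-> b u + d v, extended multiplicatively:
   g . (sum c_ij u^i v^j) = sum c_ij (g.u)^i (g.v)^j. *)
Definition act (g : 'M[K]_2) (a : skA) : skA :=
  let gu := skscale (g 0 0) sku + skscale (g 1 0) skv in
  let gv := skscale (g 0 1) sku + skscale (g 1 1) skv in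
  \sum_(i < size a) \sum_(j < size a`_i)
     skscale (skcoef a i j) (skmul (skpow gu i) (skpow gv j)).

Definition genD (n k : nat) (w : K) : 'M[K]_2 :=
  \matrix_(i < 2, j < 2)
    (if (i == 0) && (j == 0) then w ^+ (2 * k)
     else if (i == 1) && (j == 1) then (w ^+ (2 * k))^-1 else 0).

Definition genT (n k : nat) (w : K) : 'M[K]_2 :=
  \matrix_(i < 2, j < 2) (if i == j then 0 else w ^+ n).

Inductive inG (n k : nat) (w : K) : 'M[K]_2 -> Prop :=
  | inG1 : inG n k w 1%:M
  | inGD : inG n k w (genD n k w)
  | inGT : inG n k w (genT n k w)
  | inGM g h : inG n k w g -> inG n k w h -> inG n k w (g *m h)
  | inGV g : inG n k w g -> inG n k w (invmx g).

Definition invariant (n k : nat) (w : K) (a : skA) : Prop :=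
  forall g, inG n k w g -> act g a = a.

Definition invariant_ring_commutative (n k : nat) (w : K) : Prop :=
  forall a b : skA, invariant n k w a -> invariant n k w b ->
    skmul a b = skmul b a.

End Skew.

(* Main.v *)
Require Import Defs.
From HB Require Import structures.
From mathcomp Require Import all_boot all_order all_algebra.
From mathcomp Require Import ring zify.
Set Implicit Arguments. Unset Strict Implicit. Unset Printing Implicit Defensive.
Import Order.TTheory GRing.Theory.
Local Open Scope ring_scope.

Section Lib.
Variable K : fieldType.
Local Notation mon := (skmon K).
Implicit Types a b : skA K.

Lemma skcoef_mon i j p q : skcoef (mon i j) p q = ((i == p) && (j == q))%:R.
Proof.
rewrite /skcoef /skmon coefCM coefXn.
rewrite eq_sym; case: (i == p); rewrite ?mulr1 ?mulr0 ?coefXn ?coef0 //=.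
by rewrite eq_sym.
Qed.

Lemma skcoef_scale c a p q : skcoef (skscale c a) p q = c * skcoef a p q.
Proof. by rewrite /skcoef /skscale !coefCM. Qed.

Lemma skcoefD a b p q : skcoef (a + b) p q = skcoef a p q + skcoef b p q.
Proof. by rewrite /skcoef !coefD. Qed.

Lemma skcoefN a p q : skcoef (- a) p q = - skcoef a p q.
Proof. by rewrite /skcoef !coefN. Qed.

Lemma skcoef0 p q : skcoef (0 : skA K) p q = 0.
Proof. by rewrite /skcoef !coef0. Qed.

Lemma skcoef_sum (I : Type) (r : seq I) (P : pred I) (F : I -> skA K) p q :
  skcoef (\sum_(i <- r | P i) F i) p q = \sum_(i <- r | P i) skcoef (F i) p q.
Proof. by rewrite /skcoef !coef_sum. Qed.

Lemma skA_ext a b : (forall p q, skcoef a p q = skcoef b p q) -> a = b.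
Proof. move=> H; apply/polyP => p; apply/polyP => q; exact: H. Qed.

Lemma skcoef_out1 a i j : (size a <= i)%N -> skcoef a i j = 0.
Proof. by move=> h; rewrite /skcoef (nth_default 0 h) coef0. Qed.

Lemma skcoef_out2 a i j : (size (nth 0%R a i) <= j)%N -> skcoef a i j = 0.
Proof. by move=> h; rewrite /skcoef nth_default. Qed.

Lemma sum_ind1 s q (G : nat -> K) : (forall j, (s <= j)%N -> G j = 0) ->
  \sum_(j < s) (((j : nat) == q)%:R * G j) = G q.
Proof.
move=> H; case: (ltnP q s) => hq.
  rewrite (bigD1 (Ordinal hq)) //= eqxx mul1r big1 ?addr0 // => j hj.
  have -> : (nat_of_ord j == q) = false.
    by apply/negbTE; apply: contra hj => /eqP e; apply/eqP/val_inj.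
  by rewrite mul0r.
rewrite H // big1 // => j _.
have -> : (nat_of_ord j == q) = false by apply/negbTE; rewrite neq_ltn (leq_trans (ltn_ord j) hq).
by rewrite mul0r.
Qed.

Lemma sum_ind2 s d q (G : nat -> K) : (forall j, (s <= j)%N -> G j = 0) ->
  \sum_(j < s) ((d + j == q)%N%:R * G j) = (d <= q)%N%:R * G (q - d)%N.
Proof.
move=> H; case: (leqP d q) => hd.
  rewrite mul1r -(sum_ind1 (q - d)%N H); apply: eq_bigr => j _.
  by rewrite -(eqn_add2l d (nat_of_ord j)) subnKC.
rewrite /= mul0r big1 // => j _.
have -> : (d + j == q) = false.
  by apply/negbTE; rewrite neq_ltn (leq_trans hd) ?orbT // leq_addr.
by rewrite mul0r.
Qed.

Lemma sum_bound s m (F : nat -> K) : (forall j, (s <= j)%N -> F j = 0) ->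
  (forall j, (m <= j)%N -> F j = 0) ->
  \sum_(j < s) F j = \sum_(j < m) F j.
Proof.
move=> Hs Hm.
have E t : (forall j, (t <= j)%N -> F j = 0) -> \sum_(j < t) F j = \sum_(j < s + m) F j.
  move=> Ht; case: (leqP t (s + m)) => ht.
    rewrite (big_ord_widen _ _ ht) big_mkcond; apply: eq_bigr => j _.
    by case: ltnP => // hj; rewrite Ht.
  rewrite [RHS](big_ord_widen _ _ (ltnW ht)) [RHS]big_mkcond /=; apply: eq_bigr => j _.
  by case: ltnP => // hj; rewrite Hs // (leq_trans (leq_addr m s) hj).
by rewrite (E s Hs) (E m Hm).
Qed.


Lemma skcoef_mul a b p q : skcoef (skmul a b) p q =
  \sum_(i < p.+1) \sum_(j < q.+1)
     (-1) ^+ (j * (p - i)) * skcoef a i j * skcoef b (p - i) (q - j).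
Proof.
rewrite /skmul skcoef_sum.
pose T i j := (i <= p)%N%:R * ((-1) ^+ (j * (p - i)) * skcoef a i j *
   ((j <= q)%N%:R * skcoef b (p - i) (q - j))).
transitivity (\sum_(i < size a) \sum_(j < q.+1) T i j).
  apply: eq_bigr => i _; rewrite skcoef_sum.
  transitivity (\sum_(j < size (nth 0 a i)) T i j).
    apply: eq_bigr => j _; rewrite skcoef_sum.
    transitivity (\sum_(k < size b) ((i + k == p)%N%:R * ((-1) ^+ (j * k) *
        skcoef a i j * ((j <= q)%N%:R * skcoef b k (q - j))))).
      apply: eq_bigr => k _; rewrite skcoef_sum.
      transitivity (\sum_(l < size (nth 0 b k)) (i + k == p)%N%:R *
         ((-1) ^+ (j * k) * skcoef a i j) * ((j + l == q)%N%:R * skcoef b k l)).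
        apply: eq_bigr => l _.
        rewrite skcoef_scale skcoef_mon -mulnb natrM; ring.
      rewrite -big_distrr /= sum_ind2; first ring.
      by move=> l hl; apply: skcoef_out2.
    rewrite (@sum_ind2 _ _ _ (fun k => (-1) ^+ (j * k) *
        skcoef a i j * ((j <= q)%N%:R * skcoef b k (q - j)))) //.
    by move=> k hk; rewrite /= (skcoef_out1 _ hk) !mulr0.
  apply: (@sum_bound _ _ (fun j => T i j)) => j hj; rewrite /T.
    by rewrite (skcoef_out2 hj) !(mulr0, mul0r).
  by move: hj; rewrite ltnNge => /negbTE ->; rewrite !(mulr0, mul0r).
transitivity (\sum_(i < p.+1) \sum_(j < q.+1) T i j).
  apply: (@sum_bound _ _ (fun i => \sum_(j < q.+1) T i j)) => i hi.
    by apply: big1 => j _; rewrite /T (skcoef_out1 _ hi) !(mulr0, mul0r).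
  by apply: big1 => j _; move: hi; rewrite /T ltnNge => /negbTE ->; rewrite !(mulr0, mul0r).
apply: eq_bigr => i _; apply: eq_bigr => j _.
by rewrite /T -ltnS ltn_ord -ltnS ltn_ord !mul1r.
Qed.

Lemma sum_ind0 s q (G : nat -> K) :
  \sum_(j < s) (((j : nat) == q)%:R * G j) = (q < s)%N%:R * G q.
Proof.
case: (ltnP q s) => hq.
  rewrite (bigD1 (Ordinal hq)) //= eqxx mul1r big1 ?addr0 // => j hj.
  have -> : (nat_of_ord j == q) = false.
    by apply/negbTE; apply: contra hj => /eqP e; apply/eqP/val_inj.
  by rewrite mul0r.
rewrite /= mul0r big1 // => j _.
have -> : (nat_of_ord j == q) = false by apply/negbTE; rewrite neq_ltn (leq_trans (ltn_ord j) hq).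
by rewrite mul0r.
Qed.

Lemma skmul_mon c d i j k l :
  skmul (skscale c (mon i j)) (skscale d (mon k l)) =
  skscale (c * d * (-1) ^+ (j * k)) (mon (i + k) (j + l)).
Proof.
apply: skA_ext => p q; rewrite skcoef_mul skcoef_scale skcoef_mon.
transitivity (\sum_(i0 < p.+1) ((i0 : nat) == i)%:R * (\sum_(j0 < q.+1) ((j0 : nat) == j)%:R *
   ((-1) ^+ (j0 * (p - i0)) * c * (d * ((k == p - i0)%N && (l == q - j0)%N)%:R)))).
  apply: eq_bigr => i0 _; rewrite big_distrr /=; apply: eq_bigr => j0 _.
  rewrite !skcoef_scale !skcoef_mon -mulnb natrM [i == _]eq_sym [j == _]eq_sym; ring.
under eq_bigr => i0 _ do rewrite (sum_ind0 _ _ (fun j0 => (-1) ^+ (j0 * (p - i0)) * c *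
      (d * ((k == (p - i0)%N) && (l == (q - j0)%N))%:R))).
rewrite (sum_ind0 _ _ (fun i0 => (j < q.+1)%N%:R * ((-1) ^+ (j * (p - i0)) * c *
      (d * ((k == (p - i0)%N) && (l == (q - j)%N))%:R)))).
case: (leqP i p) => hi; last first.
  rewrite ltnS leqNgt hi /= mul0r.
  have -> : (i + k == p)%N = false by apply/negbTE; rewrite neq_ltn (leq_trans hi) ?orbT // leq_addr.
  by rewrite /= mulr0.
case: (leqP j q) => hj; last first.
  have -> : (j < q.+1)%N = false by rewrite ltnS leqNgt hj.
  rewrite /= mul0r mulr0.
  have -> : (j + l == q)%N = false by apply/negbTE; rewrite neq_ltn (leq_trans hj) ?orbT // leq_addr.
  by rewrite andbF /= mulr0.
rewrite ltnS hi ltnS hj !mul1r.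
have E1 : (k == p - i)%N = (i + k == p)%N by rewrite -(eqn_add2l i k) subnKC.
have E2 : (l == q - j)%N = (j + l == q)%N by rewrite -(eqn_add2l j l) subnKC.
rewrite E1 E2; case: eqP => [<-|_]; last by rewrite /= !mulr0.
rewrite addKn; ring.
Qed.

Lemma skscaleA c d a : skscale c (skscale d a) = skscale (c * d) a.
Proof. by rewrite /skscale mulrA -!polyCM. Qed.

Lemma skscale0 a : skscale 0 a = 0.
Proof. by rewrite /skscale !polyC0 mul0r. Qed.

Lemma skmulDl a1 a2 b : skmul (a1 + a2) b = skmul a1 b + skmul a2 b.
Proof.
apply: skA_ext => p q; rewrite skcoefD !skcoef_mul -big_split; apply: eq_bigr => i _.
rewrite -big_split; apply: eq_bigr => j _; rewrite skcoefD /=; ring.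
Qed.

Lemma skmulDr a b1 b2 : skmul a (b1 + b2) = skmul a b1 + skmul a b2.
Proof.
apply: skA_ext => p q; rewrite skcoefD !skcoef_mul -big_split; apply: eq_bigr => i _.
rewrite -big_split; apply: eq_bigr => j _; rewrite skcoefD /=; ring.
Qed.

Lemma skmulNl a b : skmul (- a) b = - skmul a b.
Proof.
apply: skA_ext => p q; rewrite skcoefN !skcoef_mul -sumrN; apply: eq_bigr => i _.
rewrite -sumrN; apply: eq_bigr => j _; rewrite skcoefN /=; ring.
Qed.

Lemma skmulNr a b : skmul a (- b) = - skmul a b.
Proof.
apply: skA_ext => p q; rewrite skcoefN !skcoef_mul -sumrN; apply: eq_bigr => i _.
rewrite -sumrN; apply: eq_bigr => j _; rewrite skcoefN /=; ring.
Qed.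

Lemma skscale1 a : skscale 1 a = a.
Proof. by apply: skA_ext => p q; rewrite skcoef_scale mul1r. Qed.

Lemma skpow_u x m : skpow (skscale x (mon 1 0)) m = skscale (x ^+ m) (mon m 0).
Proof.
elim: m => [|m IH]; first by rewrite expr0 skscale1.
change (skpow (skscale x (mon 1 0)) m.+1) with
  (skmul (skscale x (mon 1 0)) (skpow (skscale x (mon 1 0)) m)).
by rewrite IH skmul_mon mul0n expr0 mulr1 -exprS add1n.
Qed.

Lemma skpow_v x m : skpow (skscale x (mon 0 1)) m = skscale (x ^+ m) (mon 0 m).
Proof.
elim: m => [|m IH]; first by rewrite expr0 skscale1.
change (skpow (skscale x (mon 0 1)) m.+1) with
  (skmul (skscale x (mon 0 1)) (skpow (skscale x (mon 0 1)) m)).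
by rewrite IH skmul_mon muln0 expr0 mulr1 -exprS add1n.
Qed.

Lemma sum_coef2 a (p q : nat) (f : nat -> nat -> K) :
  \sum_(i < size a) \sum_(j < size (nth 0 a i))
     skcoef a i j * f i j * ((((i : nat) == p) && ((j : nat) == q))%:R) = skcoef a p q * f p q.
Proof.
transitivity (\sum_(i < size a) (((i : nat) == p)%:R *
   \sum_(j < size (nth 0 a i)) (((j : nat) == q)%:R * (skcoef a i j * f i j)))).
  apply: eq_bigr => i _; rewrite big_distrr /=; apply: eq_bigr => j _.
  rewrite -mulnb natrM; ring.
transitivity (\sum_(i < size a) (((i : nat) == p)%:R * (skcoef a i q * f i q))).
  apply: eq_bigr => i _; congr (_ * _).
  apply: (@sum_ind1 _ _ (fun j => skcoef a i j * f i j)).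
  by move=> j hj; rewrite /= (skcoef_out2 hj) mul0r.
apply: (@sum_ind1 _ _ (fun i => skcoef a i q * f i q)).
by move=> i hi; rewrite /= (skcoef_out1 _ hi) mul0r.
Qed.

Lemma sum_coef2s a (p q : nat) (f : nat -> nat -> K) :
  \sum_(i < size a) \sum_(j < size (nth 0 a i))
     skcoef a i j * f i j * ((((j : nat) == p) && ((i : nat) == q))%:R) = skcoef a q p * f q p.
Proof.
rewrite -(sum_coef2 a q p f); apply: eq_bigr => i _; apply: eq_bigr => j _.
by rewrite andbC.
Qed.

Lemma act_diag (g : 'M[K]_2) a p q : g 0 1 = 0 -> g 1 0 = 0 ->
  skcoef (act g a) p q = skcoef a p q * (g 0 0 ^+ p * g 1 1 ^+ q).
Proof.
move=> h01 h10; rewrite /act; cbv zeta.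
rewrite h01 h10 !skscale0 addr0 add0r /sku /skv skcoef_sum.
rewrite -(sum_coef2 a p q (fun i j => g 0 0 ^+ i * g 1 1 ^+ j)).
apply: eq_bigr => i _; rewrite skcoef_sum; apply: eq_bigr => j _.
rewrite skpow_u skpow_v skmul_mon skcoef_scale skcoef_scale skcoef_mon addn0 add0n muln0 expr0 mulr1.
by rewrite mulrA.
Qed.

Lemma act_anti (g : 'M[K]_2) a p q : g 0 0 = 0 -> g 1 1 = 0 ->
  skcoef (act g a) p q = skcoef a q p * (g 1 0 ^+ q * g 0 1 ^+ p * (-1) ^+ (q * p)).
Proof.
move=> h00 h11; rewrite /act; cbv zeta.
rewrite h00 h11 !skscale0 addr0 add0r /sku /skv skcoef_sum.
rewrite -(sum_coef2s a p q (fun i j => g 1 0 ^+ i * g 0 1 ^+ j * (-1) ^+ (i * j))).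
apply: eq_bigr => i _; rewrite skcoef_sum; apply: eq_bigr => j _.
rewrite skpow_u skpow_v skmul_mon skcoef_scale skcoef_scale skcoef_mon addn0 add0n.
by rewrite mulrA.
Qed.

Lemma skmul_comm_parity a b :
  (forall p q, skcoef a p q != 0 -> odd p = odd q) ->
  (forall p q, skcoef b p q != 0 -> odd p = odd q) ->
  skmul a b = skmul b a.
Proof.
move=> Ha Hb; apply: skA_ext => p q; rewrite !skcoef_mul.
rewrite [RHS](reindex_inj rev_ord_inj) /=; apply: eq_bigr => i _.
rewrite [RHS](reindex_inj rev_ord_inj) /=; apply: eq_bigr => j _.
have hi : (i <= p)%N by rewrite -ltnS.
have hj : (j <= q)%N by rewrite -ltnS.
rewrite !subSS !subKn //.
have [->|na] := eqVneq (skcoef a i j) 0; first by rewrite !(mulr0, mul0r).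
have [->|nb] := eqVneq (skcoef b (p - i) (q - j)) 0; first by rewrite !(mulr0, mul0r).
have e1 := Ha _ _ na; have e2 := Hb _ _ nb.
rewrite -signr_odd -[in RHS]signr_odd !oddM e1 e2 andbC; ring.
Qed.

End Lib.

Section Mx.
Variable K : fieldType.

Lemma ord2 (a : 'I_2) : a = 0 \/ a = 1.
Proof. by case: a => [[|[|m]] h]; [left | right | by []]; apply: val_inj. Qed.

Lemma mx2_ext (A B : 'M[K]_2) : A 0 0 = B 0 0 -> A 0 1 = B 0 1 ->
  A 1 0 = B 1 0 -> A 1 1 = B 1 1 -> A = B.
Proof.
move=> h1 h2 h3 h4; apply/matrixP => a b.
by case: (ord2 a) => ->; case: (ord2 b) => ->.
Qed.

Lemma mul2 (A B : 'M[K]_2) a b : (A *m B) a b = A a 0 * B 0 b + A a 1 * B 1 b.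
Proof.
rewrite !mxE big_ord_recl big_ord_recl big_ord0 addr0.
by have -> : lift ord0 (ord0 : 'I_1) = 1 :> 'I_2 by apply: val_inj.
Qed.

Lemma inv_of (g h : 'M[K]_2) : g *m h = 1%:M -> invmx g = h.
Proof.
move=> E; have [gu _] := mulmx1_unit E.
by rewrite -[h]mul1mx -(mulVmx gu) -mulmxA E mulmx1.
Qed.

Definition mk2 (a b c d : K) : 'M[K]_2 :=
  \matrix_(i < 2, j < 2) if i == 0 then (if j == 0 then a else b) else (if j == 0 then c else d).

Lemma mk2E a b c d : [/\ mk2 a b c d 0 0 = a, mk2 a b c d 0 1 = b,
  mk2 a b c d 1 0 = c & mk2 a b c d 1 1 = d].
Proof. by rewrite !mxE. Qed.

End Mx.

Section ActE.
Variable K : fieldType.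

Definition ee (r s : nat) : skA K := skmon K r s - skmon K s r.

Lemma ee_coef r s p q : skcoef (ee r s) p q =
  ((r == p) && (s == q))%:R - ((s == p) && (r == q))%:R.
Proof. by rewrite /ee skcoefD skcoefN !skcoef_mon. Qed.

Lemma act_ee_diag r s (g : 'M[K]_2) : r != s -> g 0 1 = 0 -> g 1 0 = 0 ->
  g 0 0 ^+ r * g 1 1 ^+ s = 1 -> g 0 0 ^+ s * g 1 1 ^+ r = 1 ->
  act g (ee r s) = ee r s.
Proof.
move=> rs h01 h10 c1 c2; apply: skA_ext => p q; rewrite act_diag // ee_coef.
have sr : (s == r) = false by rewrite eq_sym (negbTE rs).
case: (boolP ((r == p) && (s == q))) => [/andP[/eqP <- /eqP <-] | h1].
  by rewrite ?eqxx ?sr ?(negbTE rs) /= c1 subr0 mulr1.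
case: (boolP ((s == p) && (r == q))) => [/andP[/eqP <- /eqP <-] | h2].
  by rewrite ?eqxx ?sr ?(negbTE rs) /= c2 mulr1.
by rewrite /= subrr mul0r.
Qed.

Lemma act_ee_anti r s (g : 'M[K]_2) : r != s -> g 0 0 = 0 -> g 1 1 = 0 ->
  g 1 0 ^+ s * g 0 1 ^+ r * (-1) ^+ (s * r) = -1 ->
  g 1 0 ^+ r * g 0 1 ^+ s * (-1) ^+ (r * s) = -1 ->
  act g (ee r s) = ee r s.
Proof.
move=> rs h00 h11 c1 c2; apply: skA_ext => p q; rewrite act_anti // !ee_coef.
have sr : (s == r) = false by rewrite eq_sym (negbTE rs).
case: (boolP ((r == p) && (s == q))) => [/andP[/eqP <- /eqP <-] | h1].
  by rewrite ?eqxx ?sr ?(negbTE rs) /= c1 sub0r mulN1r opprK subr0.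
case: (boolP ((s == p) && (r == q))) => [/andP[/eqP <- /eqP <-] | h2].
  by rewrite ?eqxx ?sr ?(negbTE rs) /= c2 subr0 mul1r sub0r.
have -> : ((r == q) && (s == p)) = false by apply/negbTE; rewrite andbC.
have -> : ((s == q) && (r == p)) = false by apply/negbTE; rewrite andbC.
by rewrite /= subrr mul0r.
Qed.

Lemma skmul_mon1 i j k l : skmul (skmon K i j) (skmon K k l) =
  skscale ((-1) ^+ (j * k)) (skmon K (i + k) (j + l)).
Proof. by rewrite -[skmon K i j]skscale1 -[skmon K k l]skscale1 skmul_mon !mul1r. Qed.

End ActE.

Section Main.
Variable K : fieldType.
Variables n k : nat.
Variable w : K.
Hypotheses (hn : (0 < n)%N) (hk : (0 < k)%N) (hw : (2 * n * k).-primitive_root w).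

Lemma w_one e : (2 * n * k %| e)%N -> w ^+ e = 1.
Proof. by case/dvdnP => m ->; rewrite mulnC exprM (prim_expr_order hw) expr1n. Qed.

Lemma w_nz : w != 0.
Proof.
apply/negP => /eqP w0; have := prim_expr_order hw; rewrite w0 expr0n.
have -> : (2 * n * k == 0)%N = false by apply/negbTE; rewrite !muln_eq0 negb_or -!lt0n hn hk.
by move/eqP; rewrite eq_sym oner_eq0.
Qed.

Lemma w_nk : w ^+ (n * k) = -1.
Proof.
set x := w ^+ (n * k).
have h2 : x ^+ 2 = 1 by rewrite -exprM; apply: w_one; rewrite (_ : (n * k * 2 = 2 * n * k)%N) ?dvdnn //; ring.
have h1 : x != 1.
  rewrite -(expr0 w) /x (eq_prim_root_expr hw) mod0n modn_small; first by rewrite muln_eq0 negb_or -!lt0n hn hk.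
  by rewrite -mulnA -[X in (X < _)%N]mul1n ltn_pmul2r // muln_gt0 hn hk.
have : (x - 1) * (x + 1) = 0 by rewrite -subr_sqr h2 expr1n subrr.
move/eqP; rewrite mulf_eq0 subr_eq0 (negbTE h1) /= addr_eq0 => /eqP //.
Qed.

Lemma cancel_nz (c X : K) : c != 0 -> c * X = c -> X = 1.
Proof. by move=> nz E; apply: (mulfI nz); rewrite mulr1. Qed.

Lemma genD_01 : genD n k w 0 1 = 0. Proof. by rewrite /genD mxE. Qed.
Lemma genD_10 : genD n k w 1 0 = 0. Proof. by rewrite /genD mxE. Qed.
Lemma genD_00 : genD n k w 0 0 = w ^+ (2 * k). Proof. by rewrite /genD mxE. Qed.
Lemma genD_11 : genD n k w 1 1 = (w ^+ (2 * k))^-1. Proof. by rewrite /genD mxE. Qed.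
Lemma genT_00 : genT n k w 0 0 = 0. Proof. by rewrite /genT mxE. Qed.
Lemma genT_11 : genT n k w 1 1 = 0. Proof. by rewrite /genT mxE. Qed.
Lemma genT_01 : genT n k w 0 1 = w ^+ n. Proof. by rewrite /genT mxE. Qed.
Lemma genT_10 : genT n k w 1 0 = w ^+ n. Proof. by rewrite /genT mxE. Qed.

Lemma parity_n a : ~~ odd n -> Defs.invariant n k w a ->
  forall p q, skcoef a p q != 0 -> odd p = odd q.
Proof.
move=> hne Ha p q nz.
have E := f_equal (fun x => skcoef x p q) (Ha _ (inGD n k w)).
rewrite /= act_diag ?genD_01 ?genD_10 // genD_00 genD_11 in E.
have X1 := cancel_nz nz E.
set l := w ^+ (2 * k) in X1.
have lnz : l != 0 by rewrite expf_neq0 // w_nz.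
have e : l ^+ p = l ^+ q.
  apply: divr1_eq; by rewrite -exprVn.
move: e; rewrite /l -!exprM => /eqP; rewrite (eq_prim_root_expr hw).
rewrite (_ : (2 * n * k = 2 * k * n)%N); last by ring.
rewrite -!muln_modr eqn_pmul2l ?muln_gt0 // => /eqP e.
have h2 : (2 %| n)%N by rewrite dvdn2.
have : (p %% 2 = q %% 2)%N by rewrite -(modn_dvdm p h2) -(modn_dvdm q h2) e.
by rewrite !modn2; case: (odd p); case: (odd q).
Qed.

Lemma parity_k a : ~~ odd k -> Defs.invariant n k w a ->
  forall p q, skcoef a p q != 0 -> odd p = odd q.
Proof.
move=> hke Ha p q nz.
have E1 := f_equal (fun x => skcoef x p q) (Ha _ (inGT n k w)).
have E2 := f_equal (fun x => skcoef x q p) (Ha _ (inGT n k w)).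
rewrite /= act_anti ?genT_00 ?genT_11 // genT_01 genT_10 in E1.
rewrite /= act_anti ?genT_00 ?genT_11 // genT_01 genT_10 in E2.
rewrite -E2 -mulrA in E1.
have X1 := cancel_nz nz E1.
have : w ^+ (n * (p + q) * 2) = w ^+ 0.
  rewrite expr0 -X1 (mulnC q p) [in LHS]exprM [in LHS]exprM exprD.
  transitivity ((w ^+ n ^+ p * w ^+ n ^+ q) ^+ 2 * ((-1) ^+ (p * q)) ^+ 2).
    by rewrite sqrr_sign mulr1.
  ring.
move/eqP; rewrite (eq_prim_root_expr hw) mod0n.
rewrite (_ : (n * (p + q) * 2 = (2 * n) * (p + q))%N); last by ring.
rewrite -muln_modr muln_eq0 muln_eq0 /= (negbTE (lt0n_neq0 hn)) /= => /eqP hpq.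
have h2 : (2 %| p + q)%N.
  by apply: (dvdn_trans _ (_ : (k %| p + q)%N)); rewrite ?dvdn2 // /dvdn hpq.
move: h2; rewrite dvdn2 oddD; by case: (odd p); case: (odd q).
Qed.

Lemma comm_dir : (~~ odd n \/ ~~ odd k) -> invariant_ring_commutative n k w.
Proof.
move=> h a b Ha Hb; apply: skmul_comm_parity.
  by case: h => h; [apply: parity_n | apply: parity_k].
by case: h => h; [apply: parity_n | apply: parity_k].
Qed.

End Main.

Section Odd.
Variable K : fieldType.
Variables n k : nat.
Variable w : K.
Hypotheses (hn : (0 < n)%N) (hk : (0 < k)%N) (hw : (2 * n * k).-primitive_root w).
Hypotheses (on : odd n) (ok : odd k).

Definition NN := (n * k)%N.
Definition jj := (n * (2 * (k - 1)).+1)%N.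
Definition ii := (jj + 2 * n)%N.

Lemma odd_NN : odd NN. Proof. by rewrite /NN oddM on ok. Qed.
Lemma odd_jj : odd jj. Proof. by rewrite /jj oddM on /= oddM. Qed.
Lemma odd_ii : odd ii. Proof. by rewrite /ii oddD odd_jj oddM. Qed.
Lemma NN_gt0 : (0 < NN)%N. Proof. by rewrite /NN muln_gt0 hn hk. Qed.
Lemma iijj : (ii + jj = 4 * n * k)%N. Proof. rewrite /ii /jj; nia. Qed.
Lemma ii_neq_jj : ii != jj. Proof. rewrite /ii; apply/eqP; lia. Qed.

Definition C1 (x y : K) := [/\ x ^+ NN = 1, y ^+ NN = 1, x ^+ ii * y ^+ jj = 1 & x ^+ jj * y ^+ ii = 1].
Definition C2 (x y : K) := [/\ x ^+ NN = -1, y ^+ NN = -1, x ^+ ii * y ^+ jj = 1 & x ^+ jj * y ^+ ii = 1].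

Lemma C11 x y x' y' : C1 x y -> C1 x' y' -> C1 (x * x') (y * y').
Proof.
case=> a1 a2 a3 a4 [b1 b2 b3 b4]; split; rewrite !exprMn ?a1 ?a2 ?b1 ?b2 ?mulr1 //.
  by transitivity ((x ^+ ii * y ^+ jj) * (x' ^+ ii * y' ^+ jj)); [ring | rewrite a3 b3 mulr1].
by transitivity ((x ^+ jj * y ^+ ii) * (x' ^+ jj * y' ^+ ii)); [ring | rewrite a4 b4 mulr1].
Qed.

Lemma C12 x y x' y' : C1 x y -> C2 x' y' -> C2 (x * x') (y * y').
Proof.
case=> a1 a2 a3 a4 [b1 b2 b3 b4]; split; rewrite !exprMn ?a1 ?a2 ?b1 ?b2 ?mul1r //.
  by transitivity ((x ^+ ii * y ^+ jj) * (x' ^+ ii * y' ^+ jj)); [ring | rewrite a3 b3 mulr1].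
by transitivity ((x ^+ jj * y ^+ ii) * (x' ^+ jj * y' ^+ ii)); [ring | rewrite a4 b4 mulr1].
Qed.

Lemma C21 x y x' y' : C2 x y -> C1 x' y' -> C2 (x * y') (y * x').
Proof.
case=> a1 a2 a3 a4 [b1 b2 b3 b4]; split; rewrite !exprMn ?a1 ?a2 ?b1 ?b2 ?mulr1 //.
  by transitivity ((x ^+ ii * y ^+ jj) * (x' ^+ jj * y' ^+ ii)); [ring | rewrite a3 b4 mulr1].
by transitivity ((x ^+ jj * y ^+ ii) * (x' ^+ ii * y' ^+ jj)); [ring | rewrite a4 b3 mulr1].
Qed.

Lemma C22 x y x' y' : C2 x y -> C2 x' y' -> C1 (x * y') (y * x').
Proof.
case=> a1 a2 a3 a4 [b1 b2 b3 b4]; split; rewrite !exprMn ?a1 ?a2 ?b1 ?b2 ?mulrNN ?mulr1 //.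
  by transitivity ((x ^+ ii * y ^+ jj) * (x' ^+ jj * y' ^+ ii)); [ring | rewrite a3 b4 mulr1].
by transitivity ((x ^+ jj * y ^+ ii) * (x' ^+ ii * y' ^+ jj)); [ring | rewrite a4 b3 mulr1].
Qed.

Lemma C1V x y : C1 x y -> C1 x^-1 y^-1.
Proof. by case=> a1 a2 a3 a4; split; rewrite !exprVn -?invfM ?a1 ?a2 ?a3 ?a4 invr1. Qed.

Lemma C2V x y : C2 x y -> C2 y^-1 x^-1.
Proof. by case=> a1 a2 a3 a4; split; rewrite !exprVn -?invfM 1?mulrC ?a1 ?a2 ?a3 ?a4 ?invr1 ?invrN1. Qed.

Lemma C1_nz x y : C1 x y -> x != 0 /\ y != 0.
Proof.
have h0 : (0 : K) ^+ NN = 0 by rewrite expr0n eqn0Ngt NN_gt0.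
case=> a1 a2 _ _; split; apply/eqP => e; [move: a1 | move: a2];
  by rewrite e h0 => /eqP; rewrite eq_sym oner_eq0.
Qed.

Lemma C2_nz x y : C2 x y -> x != 0 /\ y != 0.
Proof.
have h0 : (0 : K) ^+ NN = 0 by rewrite expr0n eqn0Ngt NN_gt0.
case=> a1 a2 _ _; split; apply/eqP => e; [move: a1 | move: a2];
  by rewrite e h0 => /eqP; rewrite eq_sym oppr_eq0 oner_eq0.
Qed.

Definition PP (g : 'M[K]_2) :=
  (g 0 1 = 0 /\ g 1 0 = 0 /\ C1 (g 0 0) (g 1 1)) \/
  (g 0 0 = 0 /\ g 1 1 = 0 /\ C2 (g 0 1) (g 1 0)).

Lemma PP_mul g h : PP g -> PP h -> PP (g *m h).
Proof.
case=> [[g01 [g10 cg]] | [g00 [g11 cg]]] [[h01 [h10 ch]] | [h00 [h11 ch]]]; rewrite /PP !mul2.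
- left; rewrite g01 g10 h01 h10 !(mulr0, mul0r, addr0, add0r); split => //; split => //.
  exact: C11.
- right; rewrite g01 g10 h00 h11 !(mulr0, mul0r, addr0, add0r); split => //; split => //.
  exact: C12.
- right; rewrite g00 g11 h01 h10 !(mulr0, mul0r, addr0, add0r); split => //; split => //.
  exact: C21.
- left; rewrite g00 g11 h00 h11 !(mulr0, mul0r, addr0, add0r); split => //; split => //.
  exact: C22.
Qed.

Lemma PP_inv g : PP g -> PP (invmx g).
Proof.
case=> [[g01 [g10 cg]] | [g00 [g11 cg]]].
  have [nx ny] := C1_nz cg.
  rewrite (@inv_of _ g (mk2 (g 0 0)^-1 0 0 (g 1 1)^-1)).
    by left; have [-> -> -> ->] := mk2E (g 0 0)^-1 0 0 (g 1 1)^-1; split => //; split => //; exact: C1V.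
  have [e1 e2 e3 e4] := mk2E (g 0 0)^-1 0 0 (g 1 1)^-1.
  by apply: mx2_ext; rewrite mul2 !mxE /= ?e1 ?e2 ?e3 ?e4 ?g01 ?g10 !(mulr0, mul0r, addr0, add0r) ?mulfV.
have [nx ny] := C2_nz cg.
rewrite (@inv_of _ g (mk2 0 (g 1 0)^-1 (g 0 1)^-1 0)).
  by right; have [-> -> -> ->] := mk2E 0 (g 1 0)^-1 (g 0 1)^-1 0; split => //; split => //; exact: C2V.
have [e1 e2 e3 e4] := mk2E 0 (g 1 0)^-1 (g 0 1)^-1 0.
by apply: mx2_ext; rewrite mul2 !mxE /= ?e1 ?e2 ?e3 ?e4 ?g00 ?g11 !(mulr0, mul0r, addr0, add0r) ?mulfV.
Qed.

Lemma PP1 : PP 1%:M.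
Proof. by left; rewrite !mxE /=; split => //; split => //; split; rewrite ?expr1n ?mulr1. Qed.

Lemma PPD : PP (genD n k w).
Proof.
left; rewrite genD_01 genD_10 genD_00 genD_11; split => //; split => //.
set l := w ^+ (2 * k).
have lnz : l != 0 by rewrite expf_neq0 // (w_nz hn hk hw).
have l1 : l ^+ NN = 1.
  rewrite /l -exprM; apply: (w_one hw); apply/dvdnP; exists k; rewrite /NN; ring.
have l2 : l ^+ (2 * n) = 1.
  rewrite /l -exprM; apply: (w_one hw); apply/dvdnP; exists 2%N; ring.
split; rewrite ?exprVn ?l1 ?invr1 // /ii exprD.
  by rewrite mulrC mulrA mulVf ?mul1r ?l2 // expf_neq0.
by rewrite invfM mulrA mulfV ?mul1r ?l2 ?invr1 // expf_neq0.
Qed.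

Lemma PPT : PP (genT n k w).
Proof.
right; rewrite genT_00 genT_11 genT_01 genT_10; split => //; split => //.
have m1 : (w ^+ n) ^+ NN = -1.
  by rewrite -exprM /NN mulnC exprM (w_nk hn hk hw) -signr_odd on expr1.
split => //; rewrite -exprD; [rewrite iijj | rewrite addnC iijj];
  rewrite -exprM; apply: (w_one hw); apply/dvdnP; exists (2 * n)%N; ring.
Qed.

Lemma PP_inG g : inG n k w g -> PP g.
Proof.
elim=> [|||g1 h1 _ P1 _ P2|g1 _ P1]; [exact: PP1 | exact: PPD | exact: PPT | exact: PP_mul | exact: PP_inv].
Qed.

Lemma inv_a : Defs.invariant n k w (ee K NN 0).
Proof.
move=> g /PP_inG [[g01 [g10 [c1 c2 _ _]]] | [g00 [g11 [c1 c2 _ _]]]].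
  apply: act_ee_diag => //; first by rewrite -lt0n NN_gt0.
    by rewrite c1 expr0 mulr1.
  by rewrite c2 expr0 mul1r.
apply: act_ee_anti => //; first by rewrite -lt0n NN_gt0.
  by rewrite c1 expr0 mul1r mul0n expr0 mulr1.
by rewrite c2 expr0 mulr1 muln0 expr0 mulr1.
Qed.

Lemma sign_ij : (-1) ^+ (jj * ii) = - 1 :> K.
Proof. by rewrite -signr_odd oddM odd_ii odd_jj expr1. Qed.

Lemma inv_b : Defs.invariant n k w (ee K ii jj).
Proof.
move=> g /PP_inG [[g01 [g10 [_ _ c1 c2]]] | [g00 [g11 [_ _ c1 c2]]]].
  by apply: act_ee_diag => //; exact: ii_neq_jj.
apply: act_ee_anti => //; first exact: ii_neq_jj.
  by rewrite [g 1 0 ^+ jj * _]mulrC c1 sign_ij mul1r.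
by rewrite mulnC sign_ij [g 1 0 ^+ ii * _]mulrC c2 mul1r.
Qed.

Lemma noncomm : (2%:R : K) != 0 ->
  skmul (ee K NN 0) (ee K ii jj) != skmul (ee K ii jj) (ee K NN 0).
Proof.
move=> two; apply/eqP => E.
have := f_equal (fun x => skcoef x (NN + ii) jj) E.
rewrite /ee /= !(skmulDl, skmulDr, skmulNl, skmulNr, skmul_mon1).
rewrite !(skcoefD, skcoefN, skcoef_scale, skcoef_mon) !(add0n, addn0, mul0n, muln0, expr0).
have f1 : (ii == jj) = false by apply/negbTE; exact: ii_neq_jj.
have f2 : (ii == (NN + ii)%N) = false by apply/negbTE; rewrite neq_ltn -{1}[ii]add0n ltn_add2r NN_gt0.
have f3 : (jj == (NN + ii)%N) = false.
  by apply/eqP; rewrite /ii; have := NN_gt0; lia.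
rewrite f1 f2 f3 [(ii + NN)%N]addnC !eqxx /= andbF /=.
rewrite (_ : (-1) ^+ (jj * NN) = -1 :> K); last by rewrite -signr_odd oddM odd_jj odd_NN expr1.
rewrite andbF !(mulr0, mul1r, mulr1, subr0, oppr0, addr0) => /eqP.
by rewrite -subr_eq0 opprK (_ : 1 + 1 = 2%:R) // (negbTE two).
Qed.

End Odd.

Theorem mainTheorem8 (K : closedFieldType) (charK0 : [pchar K] =i pred0)
  (n k : nat) (w : K) (hn : (0 < n)%N) (hk : (0 < k)%N)
  (hcop : coprime n k) (hk4 : (k %% 4 != 2)%N)
  (hw : (2 * n * k).-primitive_root w) :
  invariant_ring_commutative n k w <-> (~~ odd n \/ ~~ odd k).
Proof.
split; last by move=> h; apply: comm_dir.
move=> H; case Hn: (odd n); last by left.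
case Hk: (odd k); last by right.
have two : (2%:R : K) != 0 by rewrite ((pcharf0P K).1 charK0).
exfalso; move/negP: (noncomm hn hk hw Hn Hk two); apply.
apply/eqP; by apply: (H (ee K (NN n k) 0) (ee K (ii n k) (jj n k))); [apply: inv_a | apply: inv_b].
Qed.
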